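(* Let $(M,\tau)$ be a tracial von Neumann algebra, $p\geq2$, $\xi_1,\dots,\xi_p\in M$ self-adjoint with $\|\xi_i\|_\infty\leq1$, and $\alpha_1,\dots,\alpha_p\in\mathbb R$. Let $\delta\in(0,1)$ and $\varepsilon\in(0,\frac{\delta^2}{p-1})$. Assume $\|\xi_i\|_2\geq\delta$ for every $1\leq i\leq p$, and $|\langle\xi_i,\xi_j\rangle|\leq\varepsilon$ for every $1\leq i<j\leq p$. Then there exists $h\in M$ with $h=h^*$, $\|h\|_\infty\leq\frac{\sum_{j=1}^p|\alpha_j|}{\delta^2-(p-1)\varepsilon}$ and $\tau(h\xi_i)=\alpha_i$ for every $1\leq i\leq p$.
   Context: $\langle a,b\rangle=\tau(b^*a)$ and $\|a\|_2=\tau(a^*a)^{1/2}$. *)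

(* Defs.v *)
From HB Require Import structures.
From mathcomp Require Import all_boot all_order all_algebra.
Set Implicit Arguments. Unset Strict Implicit. Unset Printing Implicit Defensive.
Import Order.TTheory GRing.Theory Num.Theory.
Local Open Scope ring_scope.

(* A tracial (unital) C*-algebra with a faithful tracial state, over a
   numeric algebraically closed field C (e.g. algC or R[i]). *)
Record tracial_alg (C : numClosedFieldType) (M : algType C) := TracialAlg {
  star : M -> M;
  opnorm : M -> C;
  tau : M -> C;
  starK : forall x, star (star x) = x;
  starD : forall x y, star (x + y) = star x + star y;
  starZ : forall (a : C) x, star (a *: x) = a^* *: star x;
  starM : forall x y, star (x * y) = star y * star x;
  tauD : forall x y, tau (x + y) = tau x + tau y;
  tauZ : forall (a : C) x, tau (a *: x) = a * tau x;
  tau1 : tau 1 = 1;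
  tau_star : forall x, tau (star x) = (tau x)^*;
  tauC : forall x y, tau (x * y) = tau (y * x);
  tau_pos : forall x, 0 <= tau (star x * x);
  tau_faithful : forall x, tau (star x * x) = 0 -> x = 0;
  opnorm_ge0 : forall x, 0 <= opnorm x;
  opnorm_eq0 : forall x, opnorm x = 0 -> x = 0;
  opnormD : forall x y, opnorm (x + y) <= opnorm x + opnorm y;
  opnormZ : forall (a : C) x, opnorm (a *: x) = `|a| * opnorm x;
  opnormM : forall x y, opnorm (x * y) <= opnorm x * opnorm y;
  opnorm_Cstar : forall x, opnorm (star x * x) = opnorm x ^+ 2;
  opnorm_complete : forall u : nat -> M,
    (forall e : C, 0 < e -> exists N, forall m n, (N <= m)%N -> (N <= n)%N ->
        opnorm (u m - u n) < e) ->
    exists l, forall e : C, 0 < e -> exists N, forall n, (N <= n)%N ->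
        opnorm (u n - l) < e
}.

Definition ip (C : numClosedFieldType) (M : algType C) (A : tracial_alg M)
  (a b : M) : C := tau A (star A b * a).

Definition l2norm (C : numClosedFieldType) (M : algType C) (A : tracial_alg M)
  (a : M) : C := sqrtC (tau A (star A a * a)).

(* Main.v *)
From HB Require Import structures.
From mathcomp Require Import all_boot all_order all_algebra.
From mathcomp Require Import ring.
Import Order.TTheory GRing.Theory Num.Theory.
Local Open Scope ring_scope.

Lemma dd_ineq (C : numClosedFieldType) (p : nat) (G : 'M[C]_p) (d e : C) :
  (0 < p)%N -> 0 <= d -> 0 <= e ->
  (forall i, d <= G i i) -> (forall i j, i != j -> `|G j i| <= e) ->
  forall c : 'rV_p,
  (d - (p.-1)%:R * e) * (\sum_i `|c 0 i|) <= \sum_i `|(c *m G) 0 i|.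
Proof.
move=> hp d0 e0 Gd Ge c.
set S := \sum_i `|c 0 i|.
have key : forall i, `|c 0 i| * d - e * (S - `|c 0 i|) <= `|(c *m G) 0 i|.
  move=> i; rewrite mxE (bigD1 i) //=.
  apply: le_trans (lerB_normD _ _).
  apply: lerB.
    rewrite normrM (@ger0_norm _ (G i i)); last exact: le_trans (Gd i).
    by apply: ler_wpM2l => //.
  have -> : S - `|c 0 i| = \sum_(j | j != i) `|c 0 j|.
    by rewrite /S (bigD1 i) //= addrAC subrr add0r.
  apply: le_trans (ler_norm_sum _ _ _) _.
  rewrite mulr_sumr.
  apply: ler_sum => j ji; rewrite normrM mulrC.
  by apply: ler_wpM2r => //; apply: Ge; rewrite eq_sym.
apply: le_trans (ler_sum _ (fun i _ => key i)).
rewrite sumrB -mulr_suml -mulr_sumr sumrB sumr_const card_ord -/S.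
rewrite le_eqVlt; apply/orP; left; apply/eqP.
have Hp : (p%:R : C) = (p.-1)%:R + 1 by rewrite natr1 prednK.
rewrite -[S *+ p]mulr_natr Hp; ring.
Qed.

Require Import Defs.

Section Helpers.
Variables (C : numClosedFieldType) (M : algType C) (A : tracial_alg M).

Lemma tau0 : tau A 0 = 0.
Proof. by have := tauZ A 0 0; rewrite scale0r mul0r. Qed.

Lemma star0 : star A 0 = 0.
Proof. by have := starZ A 0 0; rewrite scale0r conjC0 scale0r. Qed.

Lemma opnorm0 : opnorm A 0 = 0.
Proof. by have := opnormZ A 0 0; rewrite scale0r normr0 mul0r. Qed.

Lemma tau_sum (I : Type) (r : seq I) (P : pred I) (F : I -> M) :
  tau A (\sum_(i <- r | P i) F i) = \sum_(i <- r | P i) tau A (F i).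
Proof. exact: (big_morph _ (tauD A) tau0). Qed.

Lemma star_sum (I : Type) (r : seq I) (P : pred I) (F : I -> M) :
  star A (\sum_(i <- r | P i) F i) = \sum_(i <- r | P i) star A (F i).
Proof. exact: (big_morph _ (starD A) star0). Qed.

Lemma opnorm_sum (I : Type) (r : seq I) (F : I -> M) :
  opnorm A (\sum_(i <- r) F i) <= \sum_(i <- r) opnorm A (F i).
Proof.
elim: r => [|x r IH]; first by rewrite !big_nil opnorm0.
rewrite !big_cons; apply: le_trans (opnormD A _ _) _.
by apply: lerD.
Qed.

End Helpers.

Theorem lemma5p3 (C : numClosedFieldType) (M : algType C) (A : tracial_alg M)
  (p : nat) (xi : 'I_p -> M) (alpha : 'I_p -> C) (delta eps : C) :
  (2 <= p)%N ->
  (forall i, star A (xi i) = xi i) ->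
  (forall i, opnorm A (xi i) <= 1) ->
  (forall i, alpha i \is Num.real) ->
  0 < delta -> delta < 1 ->
  0 < eps -> eps < delta ^+ 2 / (p.-1)%:R ->
  (forall i, delta <= l2norm A (xi i)) ->
  (forall i j : 'I_p, (i < j)%N -> `|ip A (xi i) (xi j)| <= eps) ->
  exists h : M, star A h = h /\
    opnorm A h <= (\sum_(j < p) `|alpha j|) / (delta ^+ 2 - (p.-1)%:R * eps) /\
    (forall i, tau A (h * xi i) = alpha i).
Proof.
move=> hp hs hn hal d0 d1 e0 ee hl hip.
pose G : 'M[C]_p := \matrix_(j, i) tau A (xi j * xi i).
set D := delta ^+ 2 - (p.-1)%:R * eps.
have p1pos : 0 < (p.-1)%:R :> C by rewrite ltr0n -ltnS prednK // ltnW.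
have Dpos : 0 < D by rewrite subr_gt0 mulrC -ltr_pdivlMr.
have Gii : forall i, delta ^+ 2 <= G i i.
  move=> i; rewrite mxE; have := hl i; rewrite /l2norm hs => hd.
  have x0 : 0 <= tau A (xi i * xi i) by rewrite -{1}hs tau_pos.
  rewrite -(sqrtCK (tau A (xi i * xi i))) !expr2.
  by apply: ler_pM => //; apply: ltW.
have Gji : forall i j, i != j -> `|G j i| <= eps.
  move=> i j; rewrite neq_ltn => /orP [] lt; rewrite mxE.
    by have := hip _ _ lt; rewrite /ip hs.
  by have := hip _ _ lt; rewrite /ip hs tauC.
have ineq := @dd_ineq _ _ G _ _ (ltnW hp) (ltW (exprn_gt0 2 d0)) (ltW e0) Gii Gji.
have inj : forall v : 'rV_p, v *m G = 0 -> v = 0.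
  move=> v vG; have := ineq v; rewrite vG.
  under [X in _ <= X]eq_bigr do rewrite mxE normr0.
  rewrite big1_eq -/D => hle.
  have S0 : \sum_i `|v 0 i| = 0.
    apply/eqP; rewrite eq_le sumr_ge0 ?andbT //.
    by rewrite -(pmulr_rle0 _ Dpos).
  apply/rowP => j; rewrite mxE.
  apply: normr0_eq0.
  by apply: (psumr_eq0P _ S0).
have Gu : G \in unitmx.
  rewrite unitmxE unitfE; apply/negP => /det0P [v vn0 vG].
  by move/eqP: vn0; apply; apply: inj.
pose a : 'rV_p := \row_i alpha i.
pose c := a *m invmx G.
have cG : c *m G = a by rewrite mulmxKV.
pose c' : 'rV_p := \row_j (c 0 j)^*.
have c'G : c' *m G = a.
  apply/rowP => i; rewrite !mxE.
  have := congr1 (fun m : 'rV[C]_p => (m 0 i)^*) cG; rewrite /= !mxE (conj_Creal (hal i)).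
  move <-; rewrite rmorph_sum; apply: eq_bigr => j _.
  rewrite !mxE rmorphM /=; congr (_ * _).
  by rewrite -tau_star starM !hs tauC.
have cc : c' = c by rewrite /c -c'G mulmxK.
have creal : forall j, (c 0 j)^* = c 0 j.
  by move=> j; have := congr1 (fun m : 'rV[C]_p => m 0 j) cc; rewrite /= mxE.
exists (\sum_j c 0 j *: xi j); split; [|split].
- rewrite star_sum; apply: eq_bigr => j _.
  by rewrite starZ hs creal.
- apply: le_trans (@opnorm_sum _ _ A _ _ _) _.
  apply: (@le_trans _ _ (\sum_j `|c 0 j|)).
    apply: ler_sum => j _; rewrite opnormZ.
    by rewrite -{2}[`|c 0 j|]mulr1; apply: ler_wpM2l.
  rewrite ler_pdivlMr // mulrC.
  apply: le_trans (ineq c) _; rewrite cG.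
  by under eq_bigr do rewrite mxE.
- move=> i; rewrite mulr_suml tau_sum.
  have := congr1 (fun m : 'rV[C]_p => m 0 i) cG; rewrite /= !mxE => <-.
  by apply: eq_bigr => j _; rewrite -scalerAl tauZ !mxE.
Qed.
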